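(* Let $\tau\subset\mathbb{Z}^4_{\ge0}$ be a B-facet containing a point $Q$ with exactly one nonzero coordinate such that $\tau\setminus\{Q\}$ has dimension $2$. Then $\tau$ is a $B_1$-facet, or a $B_2$-facet, or a flat border.
   Context: A $k$-simplex is a set of $k+1$ affinely independent points; a $k$-simplex $S\subset\mathbb{Z}^n_{\ge0}$ is a B-simplex if there is an index $i$ with exactly $k$ vertices in $\{x_i=0\}$ and the remaining vertex having $x_i=1$. Dimension of a finite set means dimension of its affine span. A B-facet in $\mathbb{Z}^n_{\ge0}$ is a finite set $\tau\subset\mathbb{Z}^n_{\ge0}$ whose affine span is a hyperplane $\{\langle a,x\rangle=b\}$ with all $a_j>0$, such that every $(n-1)$-simplex with vertices in $\tau$ is a B-simplex. For $\tau\subset\mathbb{Z}^4_{\ge0}$: $\tau$ is a $B_1$-facet if for some $i$ exactly one point has nonzero $x_i$, with $x_i=1$; a $B_2$-facet if for some distinct $i,j$ all $x\in\tau$ have $(x_i,x_j)\in\{(0,0),(1,0),(0,1)\}$; a flat border if there are distinct $i,j$ and $C\in\tau$ with $C_i=C_j=1$ such that $\tau$ contains at least two distinct points with $x_i=x_j=0$ and every point of $\tau$ other than $C$ lies in $\{x_i=0\}\cup\{x_j=0\}$. *)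

(* Defs.v *)
From HB Require Import structures.
From mathcomp Require Import all_boot all_order all_algebra.
From mathcomp Require Import finmap.
Set Implicit Arguments. Unset Strict Implicit. Unset Printing Implicit Defensive.
Import Order.TTheory GRing.Theory Num.Theory.
Local Open Scope ring_scope.
Local Open Scope fset_scope.

Definition pt (n : nat) := 'rV[nat]_n.

Definition coord n (x : pt n) (i : 'I_n) : nat := x ord0 i.

Definition ptQ n (x : pt n) : 'rV[rat]_n := map_mx (fun k : nat => (k%:R : rat)) x.

Definition in_aff_span n (S : {fset pt n}) (y : 'rV[rat]_n) : Prop :=
  exists c : pt n -> rat,
    (\sum_(x <- S) c x = 1)%R /\ y = (\sum_(x <- S) c x *: ptQ x)%R.

(* Dimension of a (nonempty) finite set = dimension of its affine span
   = rank of the differences x - x0 for a fixed x0 in S. *)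
Definition affdim n (S : {fset pt n}) : nat :=
  \rank (\matrix_(k < size (enum_fset S), j < n)
           (ptQ (nth (const_mx 0%N) (enum_fset S) k) ord0 j
            - ptQ (nth (const_mx 0%N) (enum_fset S) 0%N) ord0 j)%R).

Definition is_simplex n (k : nat) (S : {fset pt n}) : Prop :=
  #|` S| = k.+1 /\ affdim S = k.

Definition is_B_simplex n (k : nat) (S : {fset pt n}) : Prop :=
  is_simplex k S /\
  exists i : 'I_n,
    #|` [fset x in S | coord x i == 0%N]| = k /\
    (forall x, x \in S -> coord x i != 0%N -> coord x i = 1%N).

Definition is_B_facet n (tau : {fset pt n}) : Prop :=
  (exists (a : 'rV[rat]_n) (b : rat),
      (forall j, 0 < a ord0 j)%R /\
      (forall y : 'rV[rat]_n,
          in_aff_span tau y <-> (\sum_(j < n) a ord0 j * y ord0 j = b)%R)) /\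
  (forall S : {fset pt n}, S `<=` tau -> is_simplex n.-1 S -> is_B_simplex n.-1 S).

Definition is_B1_facet (tau : {fset pt 4}) : Prop :=
  exists i : 'I_4,
    #|` [fset x in tau | coord x i != 0%N]| = 1 /\
    (forall x, x \in tau -> coord x i != 0%N -> coord x i = 1%N).

Definition is_B2_facet (tau : {fset pt 4}) : Prop :=
  exists i j : 'I_4, i != j /\
    (forall x, x \in tau ->
       (coord x i, coord x j) \in [:: (0, 0); (1, 0); (0, 1)]%N).

Definition is_flat_border (tau : {fset pt 4}) : Prop :=
  exists (i j : 'I_4) (C : pt 4),
    [/\ i != j, C \in tau, coord C i = 1%N /\ coord C j = 1%N,
        (2 <= #|` [fset x in tau | (coord x i == 0%N) && (coord x j == 0%N)]|)%N
      & forall x, x \in tau -> x != C ->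
          (coord x i == 0%N) || (coord x j == 0%N)].

Definition nnz n (x : pt n) : nat := #|[set i : 'I_n | coord x i != 0%N]|.

(* Main.v *)
Require Import Defs.
From HB Require Import structures.
From mathcomp Require Import all_boot all_order all_algebra.
From mathcomp Require Import finmap.
From mathcomp Require Import ring lra zify.
Require Import Defs.
From Stdlib Require Import Classical.
Set Implicit Arguments. Unset Strict Implicit. Unset Printing Implicit Defensive.
Import Order.TTheory GRing.Theory Num.Theory.
Local Open Scope fset_scope.
Local Open Scope ring_scope.

Definition xr (X : pt 4) (i : 'I_4) : rat := (coord X i)%:R.

Lemma xr0 X i : coord X i = 0%N -> xr X i = 0.
Proof. by rewrite /xr => ->. Qed.
Lemma xr1 X i : coord X i = 1%N -> xr X i = 1.
Proof. by rewrite /xr => ->. Qed.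
Lemma xr_ge0 X i : 0 <= xr X i.
Proof. by rewrite /xr ler0n. Qed.
Lemma xr_ge1 X i : coord X i <> 0%N -> 1 <= xr X i.
Proof. move=> h; rewrite /xr ler1n; lia. Qed.
Lemma xr_eq0 X i : xr X i = 0 -> coord X i = 0%N.
Proof. by rewrite /xr => /eqP; rewrite pnatr_eq0 => /eqP. Qed.
Lemma xr_eq1 X i : xr X i = 1 -> coord X i = 1%N.
Proof. by rewrite /xr => /eqP; rewrite pnatr_eq1 => /eqP. Qed.
Lemma xr_le1 X i : xr X i <= 1 -> (coord X i <= 1)%N.
Proof. by rewrite /xr -[1]/(1%:R) ler_nat. Qed.

Section Core.
Variable l : 'I_4.
Variable P : {fset pt 4}.

Definition indep X Y Z := forall al be ga : rat,
  (forall i, i != l -> al * xr X i + be * xr Y i + ga * xr Z i = 0) ->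
  [/\ al = 0, be = 0 & ga = 0].

Definition pat (i : 'I_4) X Y Z : Prop :=
  [\/ [/\ coord X i = 0%N, coord Y i = 0%N & coord Z i = 1%N],
       [/\ coord X i = 0%N, coord Y i = 1%N & coord Z i = 0%N] |
       [/\ coord X i = 1%N, coord Y i = 0%N & coord Z i = 0%N]].

Hypothesis HN : forall X Y Z, X \in P -> Y \in P -> Z \in P -> forall al be ga : rat,
  (forall i, i != l -> al * xr X i + be * xr Y i + ga * xr Z i = 0) -> al + be + ga = 0.
Hypothesis HINJ : forall X Y, X \in P -> Y \in P ->
  (forall i, i != l -> coord X i = coord Y i) -> X = Y.
Hypothesis HAFF : forall X Y Z, X \in P -> Y \in P -> Z \in P -> indep X Y Z ->
  forall W, W \in P -> exists al be ga : rat, al + be + ga = 1 /\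
    forall i, i != l -> xr W i = al * xr X i + be * xr Y i + ga * xr Z i.
Hypothesis HPAT : forall X Y Z, X \in P -> Y \in P -> Z \in P -> indep X Y Z ->
  exists i, i != l /\ pat i X Y Z.
Hypothesis HEX : exists X Y Z, [/\ X \in P, Y \in P, Z \in P & indep X Y Z].
Hypothesis HCOV : forall i, i != l -> exists Y, Y \in P /\ coord Y i <> 0%N.

Definition Ind3 a b c := (a != l) && (b != l) && (c != l) && (a != b) && (a != c) && (b != c).

Lemma ind3_cases a b c m : Ind3 a b c -> m != l -> [\/ m = a, m = b | m = c].
Proof.
move=> /andP[/andP[/andP[/andP[/andP[ha hb] hc] hab] hac] hbc] hm.
move: l a b c m ha hb hc hab hac hbc hm.
by do 5! case=> [[|[|[|[|?]]]] ?] //=; rewrite /= => *; (try by constructor 1; apply: val_inj);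
  (try by constructor 2; apply: val_inj); constructor 3; apply: val_inj.
Qed.


Lemma xr_inj X Y i : xr X i = xr Y i -> coord X i = coord Y i.
Proof. by rewrite /xr => /eqP; rewrite eqr_nat => /eqP. Qed.

Lemma pair_indep X Y : X \in P -> Y \in P -> X <> Y -> forall al be : rat,
  (forall i, i != l -> al * xr X i + be * xr Y i = 0) -> al = 0 /\ be = 0.
Proof.
move=> hX hY nXY al be H.
have s : al + be + 0 = 0.
  apply: (HN hX hY hX) => i hi; rewrite mul0r addr0; exact: H.
have ebe : be = - al by lra.
have al0 : al = 0.
  apply/eqP; apply/negP => /negP anz; apply: nXY; apply: HINJ => // i hi.
  apply: xr_inj; have := H i hi; rewrite ebe => h.
  have : al * (xr X i - xr Y i) = 0 by rewrite -h; ring.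
  move/eqP; rewrite mulf_eq0 (negbTE anz) /= subr_eq0 => /eqP //.
split=> //; lra.
Qed.

Lemma indepF (c : rat) X Y Z i : X \in P -> Y \in P -> Z \in P -> X <> Y -> i != l ->
  xr X i = c -> xr Y i = c -> xr Z i <> c -> indep X Y Z.
Proof.
move=> hX hY hZ nXY hi eX eY eZ al be ga H.
have s := HN hX hY hZ H.
have Hi := H i hi; rewrite eX eY in Hi.
have ga0 : ga = 0.
  have : ga * (xr Z i - c) = (al * c + be * c + ga * xr Z i) - c * (al + be + ga) by ring.
  rewrite Hi s mulr0 subr0 => /eqP; rewrite mulf_eq0 subr_eq0 => /orP[/eqP //|/eqP //].
have [] := pair_indep hX hY nXY (al := al) (be := be).
  by move=> j hj; have := H j hj; rewrite ga0 mul0r addr0.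
by move=> -> ->.
Qed.

Lemma indep_sym12 X Y Z : indep X Y Z -> indep Y X Z.
Proof.
move=> H al be ga h; have [] := H be al ga.
  by move=> i hi; rewrite -(h i hi); ring.
by move=> -> -> ->.
Qed.

Lemma indep_sym23 X Y Z : indep X Y Z -> indep X Z Y.
Proof.
move=> H al be ga h; have [] := H al ga be.
  by move=> i hi; rewrite -(h i hi); ring.
by move=> -> -> ->.
Qed.

Lemma indep_neq12 X Y Z : indep X Y Z -> X <> Y.
Proof.
move=> H e; subst Y; have [] := H 1 (-1) 0.
  by move=> i _; ring.
move=> /eqP; by rewrite oner_eq0.
Qed.

Lemma indep_neq13 X Y Z : indep X Y Z -> X <> Z.
Proof. by move=> /indep_sym23 /indep_neq12. Qed.
Lemma indep_neq23 X Y Z : indep X Y Z -> Y <> Z.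
Proof. by move=> /indep_sym12 /indep_sym23 /indep_neq12. Qed.

Lemma COL X Y Z : X \in P -> Y \in P -> Z \in P -> X <> Y -> ~ indep X Y Z ->
  exists t : rat, forall i, i != l -> xr Z i = xr X i + t * (xr Y i - xr X i).
Proof.
move=> hX hY hZ nXY.
rewrite /indep => nind.
have [al nind1] := not_all_ex_not _ _ nind.
have [be nind2] := not_all_ex_not _ _ nind1.
have [ga nind3] := not_all_ex_not _ _ nind2.
have [H nz] := imply_to_and _ _ nind3.
have s := HN hX hY hZ H.
have [ga0|gnz] := eqVneq ga 0.
  exfalso; apply: nz.
  have [] := pair_indep hX hY nXY (al := al) (be := be).
    by move=> j hj; have := H j hj; rewrite ga0 mul0r addr0.
  by move=> -> ->.
exists (- be / ga) => i hi.
have Hi := H i hi.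
have eal : al = - be - ga by lra.
rewrite eal in Hi.
apply: (mulIf gnz).
have -> : (xr X i + - be / ga * (xr Y i - xr X i)) * ga = xr X i * ga - be * (xr Y i - xr X i).
  by field.
have : xr Z i * ga - (xr X i * ga - be * (xr Y i - xr X i)) =
  (- be - ga) * xr X i + be * xr Y i + ga * xr Z i by ring.
by rewrite Hi => /eqP; rewrite subr_eq0 => /eqP.
Qed.

Lemma Ind3_perm a b c : Ind3 a b c ->
  [/\ Ind3 b a c, Ind3 a c b, Ind3 c b a, Ind3 b c a & Ind3 c a b].
Proof.
move=> /andP[/andP[/andP[/andP[/andP[ha hb] hc] hab] hac] hbc].
rewrite /Ind3 ha hb hc hab hac hbc !(eq_sym b a) !(eq_sym c a) !(eq_sym c b) hab hac hbc.
by [].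
Qed.

Lemma Ind3_l a b c : Ind3 a b c -> [/\ a != l, b != l & c != l].
Proof. by move=> /andP[/andP[/andP[/andP[/andP[ha hb] hc] hab] hac] hbc]. Qed.

Lemma NZ a b c X : Ind3 a b c -> X \in P -> coord X a = 0%N -> coord X b = 0%N ->
  coord X c <> 0%N.
Proof.
move=> h3 hX ea eb ec.
have e : (1 : rat) + 0 + 0 = 0.
  apply: (HN hX hX hX) => i hi; case: (ind3_cases h3 hi) => ->; rewrite /xr ?ea ?eb ?ec; ring.
by move: e; rewrite !addr0 => /eqP; rewrite oner_eq0.
Qed.

Lemma eqInd a b c X Y : Ind3 a b c -> X \in P -> Y \in P ->
  coord X a = coord Y a -> coord X b = coord Y b -> coord X c = coord Y c -> X = Y.
Proof.
move=> h3 hX hY ea eb ec; apply: HINJ => // i hi.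
by case: (ind3_cases h3 hi) => ->.
Qed.

Lemma OU a b c X Y : Ind3 a b c -> X \in P -> Y \in P ->
  coord X a = 0%N -> coord X b = 0%N -> coord Y a = 0%N -> coord Y b = 0%N -> X = Y.
Proof.
move=> h3 hX hY xa xb ya yb.
have := HN hX hY hX (al := xr Y c) (be := - xr X c) (ga := 0).
have H : forall i, i != l -> xr Y c * xr X i + - xr X c * xr Y i + 0 * xr X i = 0.
  move=> i hi; case: (ind3_cases h3 hi) => ->; rewrite /xr ?xa ?xb ?ya ?yb; ring.
move/(_ H) => e.
apply: (eqInd h3) => //; [by rewrite xa ya|by rewrite xb yb|].
apply: xr_inj; lra.
Qed.

Lemma EXT X Y : X \in P -> Y \in P -> X <> Y -> exists Z, Z \in P /\ indep X Y Z.
Proof.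
move=> hX hY nXY; apply: NNPP => hno.
have hd : forall Z, Z \in P -> ~ indep X Y Z.
  by move=> Z hZ hi; apply: hno; exists Z.
have [A [B [C [hA hB hC hABC]]]] := HEX.
have [tA eA] := COL hX hY hA nXY (hd _ hA).
have [tB eB] := COL hX hY hB nXY (hd _ hB).
have [tC eC] := COL hX hY hC nXY (hd _ hC).
have H0 : forall i, i != l ->
    (tB - tC) * xr A i + (tC - tA) * xr B i + (tA - tB) * xr C i = 0.
  by move=> i hi; rewrite eA ?eB ?eC //; ring.
have [h1 h2 _] := hABC _ _ _ H0.
apply: (indep_neq12 hABC); apply: HINJ => // i hi; apply: xr_inj.
rewrite eA // eB //; have -> : tA = tB by lra. by [].
Qed.

Ltac patd hp := case: hp => [[? ? ?]|[? ? ?]|[? ? ?]]; try congruence.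

Lemma EU a b c X Y : Ind3 a b c -> X \in P -> Y \in P ->
  coord X a <> 0%N -> coord X b <> 0%N -> coord X c <> 0%N ->
  coord Y a <> 0%N -> coord Y b <> 0%N -> coord Y c <> 0%N -> X = Y.
Proof.
move=> h3 hX hY *; apply: NNPP => nXY.
have [Z [hZ hi]] := EXT hX hY nXY.
have [m [hm hp]] := HPAT hX hY hZ hi.
by case: (ind3_cases h3 hm) => e; subst m; patd hp.
Qed.

Definition B1c := exists i C, [/\ i != l, C \in P, coord C i = 1%N &
  forall Y, Y \in P -> coord Y i <> 0%N -> Y = C].
Definition B2c := exists i j, [/\ i != l, j != l, i != j &
  forall Y, Y \in P -> (coord Y i = 0%N /\ coord Y j = 0%N) \/
     (coord Y i = 1%N /\ coord Y j = 0%N) \/ (coord Y i = 0%N /\ coord Y j = 1%N)].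
Definition FLc := exists i j C D, (i != l /\ j != l /\ i != j) /\
  (C \in P /\ coord C i = 1%N /\ coord C j = 1%N) /\
  (D \in P /\ coord D i = 0%N /\ coord D j = 0%N) /\
  forall Y, Y \in P -> Y <> C -> coord Y i = 0%N \/ coord Y j = 0%N.
Definition Concl := B1c \/ B2c \/ FLc.

Lemma xrn0 X i : coord X i <> 0%N -> xr X i <> 0.
Proof. by move=> h /xr_eq0. Qed.
Lemma xrn1 X i : coord X i <> 1%N -> xr X i <> 1.
Proof. by move=> h /xr_eq1. Qed.

Lemma B2_from a b Y Y' X : a != l -> b != l -> a != b ->
  Y \in P -> Y' \in P -> X \in P -> indep Y Y' X ->
  coord Y a = 1%N -> coord Y' a = 1%N -> coord X a = 0%N ->
  coord Y b = 0%N -> coord Y' b = 0%N -> coord X b = 1%N -> B2c.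
Proof.
move=> ha hb hab hY hY' hX hi ya y'a xa yb y'b xb.
exists a, b; split=> // W hW.
have [al [be [ga [s e]]]] := HAFF hY hY' hX hi hW.
have ea := e a ha; have eb := e b hb.
rewrite (xr1 ya) (xr1 y'a) (xr0 xa) in ea.
rewrite (xr0 yb) (xr0 y'b) (xr1 xb) in eb.
have : xr W a + xr W b = 1 by rewrite ea eb; lra.
rewrite /xr -natrD => /eqP; rewrite pnatr_eq1 => /eqP h.
lia.
Qed.

Lemma case1 a b c X X' : Ind3 a b c -> X \in P -> X' \in P -> X <> X' ->
  coord X a = 0%N -> coord X' a = 0%N -> coord X b <> 0%N -> coord X c <> 0%N ->
  coord X' b <> 0%N -> coord X' c <> 0%N -> Concl.
Proof.
move=> h3 hX hX' nXX' xa x'a xb xc x'b x'c.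
have [ha hb hc] := Ind3_l h3.
have [_ _ _ _ h3'] := Ind3_perm h3.
have hab : a != b by move: h3 => /andP[/andP[/andP[/andP[/andP[]]]]].
have hac : a != c by move: h3 => /andP[/andP[/andP[/andP[/andP[]]]]].
have HY : forall Y, Y \in P -> coord Y a <> 0%N -> coord Y a = 1%N.
  move=> Y hY ya.
  have hi : indep X X' Y.
    by apply: (indepF (c := 0)) hX hX' hY nXX' ha (xr0 xa) (xr0 x'a) (xrn0 ya).
  have [m [hm hp]] := HPAT hX hX' hY hi.
  by case: (ind3_cases h3 hm) => e; subst m; patd hp.
have [[Y [Y' [hY [hY' [nYY' [ya y'a]]]]]]|hno] := classic (exists Y Y', Y \in P /\ Y' \in P /\
     Y <> Y' /\ coord Y a <> 0%N /\ coord Y' a <> 0%N).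
  have ya1 := HY _ hY ya; have y'a1 := HY _ hY' y'a.
  have hi : indep Y Y' X.
    apply: (indepF (c := 1)) hY hY' hX nYY' ha (xr1 ya1) (xr1 y'a1) _.
    by rewrite (xr0 xa) => /eqP; rewrite eq_sym oner_eq0.
  have [m [hm hp]] := HPAT hY hY' hX hi.
  right; left.
  case: (ind3_cases h3 hm) => e; subst m.
  - by patd hp.
  - case: hp => [[yb y'b xb1]|[? ? ?]|[? ? ?]]; try congruence.
    exact: (B2_from ha hb hab hY hY' hX hi ya1 y'a1 xa yb y'b xb1).
  - case: hp => [[yb y'b xb1]|[? ? ?]|[? ? ?]]; try congruence.
    exact: (B2_from ha hc hac hY hY' hX hi ya1 y'a1 xa yb y'b xb1).
have [Y [hY ya]] := HCOV ha.
left; exists a, Y; split=> //; first exact: HY.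
move=> Z hZ za; apply: NNPP => nZY; apply: hno; exists Z, Y; do !split=> //.
Qed.

Lemma neq_coord (X Y : pt 4) (i : 'I_4) : coord X i <> coord Y i -> X <> Y.
Proof. by move=> h e; apply: h; rewrite e. Qed.

Definition C2 := forall a b c, Ind3 a b c -> forall Y Y', Y \in P -> Y' \in P ->
  coord Y a = 0%N -> coord Y' a = 0%N -> coord Y b <> 0%N -> coord Y c <> 0%N ->
  coord Y' b <> 0%N -> coord Y' c <> 0%N -> Y = Y'.

Definition noO a b := forall Y, Y \in P -> ~ (coord Y a = 0%N /\ coord Y b = 0%N).

Lemma noO_sym a b : noO a b -> noO b a.
Proof. by move=> h Y hY [h1 h2]; apply: (h Y hY). Qed.

Lemma OB1 a b c Oa Ob Oc : Ind3 a b c -> Oa \in P -> Ob \in P -> Oc \in P ->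
  coord Oa b = 0%N -> coord Oa c = 0%N -> coord Ob a = 0%N -> coord Ob c = 0%N ->
  coord Oc a = 0%N -> coord Oc b = 0%N -> coord Oc c = 1%N -> B1c.
Proof.
move=> h3 hA hB hC ab ac ba bc ca cb cc.
have [ha hb hc] := Ind3_l h3.
have [h3bac h3acb h3cba h3bca h3cab] := Ind3_perm h3.
have aa := NZ h3bca hA ab ac.
have bb := NZ h3acb hB ba bc.
have hi : indep Oa Ob Oc.
  apply: (indepF (c := 0)) hA hB hC (neq_coord (i := a) _) hc (xr0 ac) (xr0 bc) _.
    by rewrite ba.
  by rewrite (xr1 cc) => /eqP; rewrite oner_eq0.
exists c, Oc; split=> // Y hY yc.
have [al [be [ga [s e]]]] := HAFF hA hB hC hi hY.
have ea := e a ha; have eb := e b hb; have ec := e c hc.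
rewrite (xr0 ba) (xr0 ca) in ea; rewrite (xr0 ab) (xr0 cb) in eb.
rewrite (xr0 ac) (xr0 bc) (xr1 cc) in ec.
have g1 := xr_ge1 yc.
have ga0 := xr_ge0 Y a; have gb0 := xr_ge0 Y b.
have ga1 := xr_ge1 aa; have gb1 := xr_ge1 bb.
have al0 : 0 <= al.
  rewrite leNgt; apply/negP => hal.
  have : al * xr Oa a < 0 by rewrite pmulr_llt0 //; lra.
  lra.
have be0 : 0 <= be.
  rewrite leNgt; apply/negP => hbe.
  have : be * xr Ob b < 0 by rewrite pmulr_llt0 //; lra.
  lra.
have al00 : al = 0 by lra.
have be00 : be = 0 by lra.
apply: (OU h3) => //.
- by apply: xr_eq0; rewrite ea al00; ring.
- by apply: xr_eq0; rewrite eb be00; ring.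
Qed.

Lemma case2a a b c Oa Ob Oc : Ind3 a b c -> Oa \in P -> Ob \in P -> Oc \in P ->
  coord Oa b = 0%N -> coord Oa c = 0%N -> coord Ob a = 0%N -> coord Ob c = 0%N ->
  coord Oc a = 0%N -> coord Oc b = 0%N -> Concl.
Proof.
move=> h3 hA hB hC ab ac ba bc ca cb; left.
have [ha hb hc] := Ind3_l h3.
have [h3bac h3acb h3cba h3bca h3cab] := Ind3_perm h3.
have aa := NZ h3bca hA ab ac.
have bb := NZ h3acb hB ba bc.
have cc := NZ h3 hC ca cb.
have hi : indep Oa Ob Oc.
  apply: (indepF (c := 0)) hA hB hC (neq_coord (i := a) _) hc (xr0 ac) (xr0 bc) (xrn0 cc).
  by rewrite ba.
have [m [hm hp]] := HPAT hA hB hC hi.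
case: (ind3_cases h3 hm) => e; subst m; patd hp.
- exact: (OB1 h3bca hB hC hA).
- exact: (OB1 h3cab hC hA hB).
- exact: (OB1 h3 hA hB hC).
Qed.

Definition H2b a b c Oa Ob := [/\ Ind3 a b c, Oa \in P, Ob \in P,
  coord Oa b = 0%N /\ coord Oa c = 0%N &
  (coord Ob a = 0%N /\ coord Ob c = 0%N) /\ noO a b].

Lemma H2b_swap a b c Oa Ob : H2b a b c Oa Ob -> H2b b a c Ob Oa.
Proof.
case=> h3 hA hB [ab ac] [[ba bc] no]; split.
- by case: (Ind3_perm h3).
- by [].
- by [].
- by split.
- by split; [split|apply: noO_sym].
Qed.

Ltac ind3 H := let h := fresh "hl" in let p := fresh "hp" in
  have [hla hlb hlc] := Ind3_l H; have [p h3bac h3acb h3cba h3bca h3cab] := Ind3_perm H.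

Lemma b1 a b c Oa Ob : H2b a b c Oa Ob -> forall Y, Y \in P -> coord Y c <> 0%N ->
  coord Y c = 1%N \/ (coord Y a = 0%N /\ coord Oa a = 1%N) \/
  (coord Y b = 0%N /\ coord Ob b = 1%N).
Proof.
case=> h3 hA hB [ab ac] [[ba bc] no] Y hY yc.
have [ha hb hc] := Ind3_l h3.
have [h3bac h3acb h3cba h3bca h3cab] := Ind3_perm h3.
have aa := NZ h3bca hA ab ac.
have bb := NZ h3acb hB ba bc.
have hi : indep Oa Ob Y.
  apply: (indepF (c := 0)) hA hB hY (neq_coord (i := a) _) hc (xr0 ac) (xr0 bc) (xrn0 yc).
  by rewrite ba.
have [m [hm hp]] := HPAT hA hB hY hi.
case: (ind3_cases h3 hm) => e; subst m; patd hp;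
  first [by left | by right; left | by right; right].
Qed.

Lemma pE a b c Oa Ob Y E : H2b a b c Oa Ob -> Y \in P -> E \in P ->
  coord Y a = 0%N -> coord Y b <> 0%N -> coord Y c <> 0%N ->
  coord E a <> 0%N -> coord E b <> 0%N -> coord E c <> 0%N -> False.
Proof.
move=> HH hY hE ya yb yc ea eb ec.
have H := b1 HH.
case: HH => h3 hA hB [ab ac] [[ba bc] no].
have [ha hb hc] := Ind3_l h3.
have [h3bac h3acb h3cba h3bca h3cab] := Ind3_perm h3.
have aa := NZ h3bca hA ab ac.
have ec1 : coord E c = 1%N by case: (H E hE ec) => [//|[[]|[]]].
have ea1 : coord E a = 1%N.
  have hi : indep Y Ob E.
    apply: (indepF (c := 0)) hY hB hE (neq_coord (i := c) _) ha (xr0 ya) (xr0 ba) (xrn0 ea).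
    by rewrite bc.
  have [m [hm hp]] := HPAT hY hB hE hi.
  by case: (ind3_cases h3 hm) => e; subst m; patd hp.
have nind : ~ indep Y Oa E.
  move=> hi; have [m [hm hp]] := HPAT hY hA hE hi.
  by case: (ind3_cases h3 hm) => e; subst m; patd hp.
have nYA : Y <> Oa by apply: (neq_coord (i := a)); rewrite ya; apply: nesym.
have [t et] := COL hY hA hE nYA nind.
have ea' := et a ha; have eb' := et b hb; have ec' := et c hc.
rewrite (xr1 ea1) (xr0 ya) in ea'.
rewrite (xr0 ab) in eb'.
rewrite (xr1 ec1) (xr0 ac) in ec'.
have gEb := xr_ge1 eb.
case: (H Y hY yc) => [yc1|[[_ oa1]|[yb0 _]]]; last by [].
- rewrite (xr1 yc1) in ec'.
  have t0 : t = 0 by lra.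
  by move: ea'; rewrite t0 mul0r addr0 => /eqP; rewrite oner_eq0.
- rewrite (xr1 oa1) in ea'.
  have t1 : t = 1 by lra.
  rewrite t1 in eb'.
  have : xr E b = 0 by rewrite eb'; ring.
  by move/xr_eq0.
Qed.

Lemma pc_contra a b c Oa Ob Y Z : H2b a b c Oa Ob -> Y \in P -> Z \in P ->
  coord Y a = 0%N -> coord Y b <> 0%N -> coord Y c <> 0%N ->
  coord Z a <> 0%N -> coord Z b <> 0%N -> coord Z c = 0%N -> coord Y c = 1%N.
Proof.
case=> h3 hA hB [ab ac] [[ba bc] no] hY hZ ya yb yc za zb zc.
have [ha hb hc] := Ind3_l h3.
have [h3bac h3acb h3cba h3bca h3cab] := Ind3_perm h3.
have aa := NZ h3bca hA ab ac.
have hi : indep Oa Z Y.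
  apply: (indepF (c := 0)) hA hZ hY (neq_coord (i := b) _) hc (xr0 ac) (xr0 zc) (xrn0 yc).
  by rewrite ab; apply: nesym.
have [m [hm hp]] := HPAT hA hZ hY hi.
by case: (ind3_cases h3 hm) => e; subst m; patd hp.
Qed.

Lemma pp_half a b c Oa Ob Y Y' : H2b a b c Oa Ob -> Y \in P -> Y' \in P ->
  coord Y a = 0%N -> coord Y b <> 0%N -> coord Y c <> 0%N ->
  coord Y' a <> 0%N -> coord Y' b = 0%N -> coord Y' c <> 0%N -> coord Y b = 1%N.
Proof.
case=> h3 hA hB [ab ac] [[ba bc] no] hY hY' ya yb yc y'a y'b y'c.
have [ha hb hc] := Ind3_l h3.
have [h3bac h3acb h3cba h3bca h3cab] := Ind3_perm h3.
have aa := NZ h3bca hA ab ac.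
have hi : indep Oa Y' Y.
  apply: (indepF (c := 0)) hA hY' hY (neq_coord (i := c) _) hb (xr0 ab) (xr0 y'b) (xrn0 yb).
  by rewrite ac; apply: nesym.
have [m [hm hp]] := HPAT hA hY' hY hi.
by case: (ind3_cases h3 hm) => e; subst m; patd hp.
Qed.

Lemma W_types a b c Oa Ob Z : H2b a b c Oa Ob -> Z \in P -> coord Z c <> 0%N ->
  [\/ coord Z a = 0%N /\ coord Z b <> 0%N, coord Z a <> 0%N /\ coord Z b = 0%N |
     coord Z a <> 0%N /\ coord Z b <> 0%N].
Proof.
case=> h3 hA hB [ab ac] [[ba bc] no] hZ zc.
have [za|za] := eqVneq (coord Z a) 0%N; have [zb|zb] := eqVneq (coord Z b) 0%N.
- by exfalso; apply: (no Z hZ).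
- by constructor 1; split=> //; apply/eqP.
- by constructor 2; split=> //; apply/eqP.
- by constructor 3; split; apply/eqP.
Qed.

Lemma pp_fl a b c Oa Ob Y Y' : C2 -> H2b a b c Oa Ob -> Y \in P -> Y' \in P ->
  coord Y a = 0%N -> coord Y b <> 0%N -> coord Y c <> 0%N ->
  coord Y' a <> 0%N -> coord Y' b = 0%N -> coord Y' c <> 0%N ->
  coord Y b = 1%N -> coord Y c = 1%N -> FLc.
Proof.
move=> hC2 HH hY hY' ya yb yc y'a y'b y'c yb1 yc1.
have HH' := HH.
case: HH => h3 hA hB [ab ac] [[ba bc] no].
have [ha hb hc] := Ind3_l h3.
have hbc : b != c by move: h3 => /andP[].
exists b, c, Y, Oa; do !split=> //.
move=> Z hZ nZY.
have [zc|zc] := eqVneq (coord Z c) 0%N; first by right.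
case: (W_types HH' hZ (elimN eqP zc)) => [[za zb]|[za zb]|[za zb]].
- by exfalso; apply: nZY; apply: (hC2 a b c h3) => //; apply/eqP.
- by left.
- by exfalso; apply: (pE HH' hY hZ ya yb yc za zb (elimN eqP zc)).
Qed.

Lemma pp a b c Oa Ob Y Y' : C2 -> H2b a b c Oa Ob -> Y \in P -> Y' \in P ->
  coord Y a = 0%N -> coord Y b <> 0%N -> coord Y c <> 0%N ->
  coord Y' a <> 0%N -> coord Y' b = 0%N -> coord Y' c <> 0%N -> Concl.
Proof.
move=> hC2 HH hY hY' ya yb yc y'a y'b y'c.
have HHs := H2b_swap HH.
have yb1 := pp_half HH hY hY' ya yb yc y'a y'b y'c.
have y'a1 := pp_half HHs hY' hY y'b y'a y'c yb ya yc.
have [yc1|yc1] := eqVneq (coord Y c) 1%N.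
  by right; right; apply: (pp_fl hC2 HH hY hY').
have [y'c1|y'c1] := eqVneq (coord Y' c) 1%N.
  by right; right; apply: (pp_fl hC2 HHs hY' hY).
have oa1 : coord Oa a = 1%N.
  case: (b1 HH hY yc) => [h|[[_ h]|[h _]]] //; by move/eqP: yc1.
have ob1 : coord Ob b = 1%N.
  case: (b1 HHs hY' y'c) => [h|[[_ h]|[h _]]] //; by move/eqP: y'c1.
have HH' := HH.
case: HH => h3 hA hB [ab ac] [[ba bc] no].
have [ha hb hc] := Ind3_l h3.
have [h3bac h3acb h3cba h3bca h3cab] := Ind3_perm h3.
have hab : a != b by move: h3 => /andP[/andP[/andP[/andP[/andP[]]]]].
right; left; exists a, b; split=> // Z hZ.
have [zc|zc] := eqVneq (coord Z c) 0%N.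
  have [za|za] := eqVneq (coord Z a) 0%N.
    have -> : Z = Ob by apply: (OU h3acb).
    by right; right.
  have [zb|zb] := eqVneq (coord Z b) 0%N.
    have -> : Z = Oa by apply: (OU h3bca).
    by right; left.
  exfalso; move/eqP: yc1; apply.
  exact: (pc_contra HH' hY hZ ya yb yc (elimN eqP za) (elimN eqP zb) zc).
case: (W_types HH' hZ (elimN eqP zc)) => [[za zb]|[za zb]|[za zb]].
- have -> : Z = Y by apply: (hC2 a b c h3) => //; apply/eqP.
  by right; right.
- have -> : Z = Y' by apply: (hC2 b a c h3bac) => //; apply/eqP.
  by right; left.
- by exfalso; apply: (pE HH' hY hZ ya yb yc za zb (elimN eqP zc)).
Qed.

Lemma single a b c Oa Ob Y0 : H2b a b c Oa Ob -> Y0 \in P ->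
  coord Y0 a = 0%N -> coord Y0 b <> 0%N -> coord Y0 c <> 0%N -> coord Y0 c <> 1%N ->
  coord Oa a = 1%N -> (forall Z, Z \in P -> coord Z c <> 0%N -> Z = Y0) -> B1c.
Proof.
move=> HH hY0 ya yb yc yc1 oa1 hW.
have HH' := HH.
case: HH => h3 hA hB [ab ac] [[ba bc] no].
have [ha hb hc] := Ind3_l h3.
have [h3bac h3acb h3cba h3bca h3cab] := Ind3_perm h3.
exists a, Oa; split=> // Z hZ za.
have [zc|zc] := eqVneq (coord Z c) 0%N.
  have [zb|zb] := eqVneq (coord Z b) 0%N; first by apply: (OU h3bca).
  by exfalso; apply: yc1; apply: (pc_contra HH' hY0 hZ ya yb yc za (elimN eqP zb) zc).
by exfalso; apply: za; rewrite (hW Z hZ (elimN eqP zc)).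
Qed.

Lemma case2b a b c Oa Ob : C2 -> H2b a b c Oa Ob -> Concl.
Proof.
move=> hC2 HH.
have HHs := H2b_swap HH.
have HH' := HH.
case: HH => h3 hA hB [ab ac] [[ba bc] no].
have [ha hb hc] := Ind3_l h3.
have [h3bac h3acb h3cba h3bca h3cab] := Ind3_perm h3.
have [Y0 [hY0 y0c]] := HCOV hc.
have [[Y [Y' [hY [hY' [nYY' [yc y'c]]]]]]|hno] := classic (exists Y Y', Y \in P /\ Y' \in P /\
     Y <> Y' /\ coord Y c <> 0%N /\ coord Y' c <> 0%N).
  case: (W_types HH' hY yc) => [[ya yb]|[ya yb]|[ya yb]];
  case: (W_types HH' hY' y'c) => [[y'a y'b]|[y'a y'b]|[y'a y'b]].
  - by exfalso; apply: nYY'; apply: (hC2 a b c h3).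
  - exact: (pp hC2 HH' hY hY').
  - by exfalso; apply: (pE HH' hY hY' ya yb yc).
  - exact: (pp hC2 HH' hY' hY).
  - by exfalso; apply: nYY'; apply: (hC2 b a c h3bac).
  - by exfalso; apply: (pE HHs hY hY' yb ya yc).
  - by exfalso; apply: (pE HH' hY' hY y'a y'b y'c).
  - by exfalso; apply: (pE HHs hY' hY y'b y'a y'c).
  - by exfalso; apply: nYY'; apply: (EU h3).
have hW : forall Z, Z \in P -> coord Z c <> 0%N -> Z = Y0.
  by move=> Z hZ zc; apply: NNPP => nZ; apply: hno; exists Z, Y0.
have [y0c1|y0c1] := eqVneq (coord Y0 c) 1%N.
  by left; exists c, Y0; split.
case: (b1 HH' hY0 y0c) => [y|[[y0a oa1]|[y0b ob1]]].
- by move/eqP: y0c1.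
- left; apply: (single HH' hY0 y0a _ y0c (elimN eqP y0c1) oa1 hW).
  by move=> y0b; apply: (no Y0 hY0).
- left; apply: (single HHs hY0 y0b _ y0c (elimN eqP y0c1) ob1 hW).
  by move=> y0a; apply: (no Y0 hY0).
Qed.

Definition H2c a b c Oc := [/\ Ind3 a b c, Oc \in P,
  coord Oc a = 0%N /\ coord Oc b = 0%N, noO b c & noO a c].

Lemma H2c_swap a b c Oc : H2c a b c Oc -> H2c b a c Oc.
Proof.
case=> h3 hC [ca cb] n1 n2; split=> //.
- by case: (Ind3_perm h3).
Qed.

Lemma c1 a b c Oc Y : H2c a b c Oc -> Y \in P ->
  coord Y a = 0%N -> coord Y b <> 0%N -> coord Y c <> 0%N ->
  forall Z, Z \in P -> coord Z a <> 0%N ->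
  coord Z a = 1%N \/ (coord Z b = 0%N /\ coord Y b = 1%N).
Proof.
case=> h3 hC [ca cb] n1 n2 hY ya yb yc Z hZ za.
have [ha hb hc] := Ind3_l h3.
have cc := NZ h3 hC ca cb.
have hi : indep Oc Y Z.
  apply: (indepF (c := 0)) hC hY hZ (neq_coord (i := b) _) ha (xr0 ca) (xr0 ya) (xrn0 za).
  by rewrite cb; apply: nesym.
have [m [hm hp]] := HPAT hC hY hZ hi.
case: (ind3_cases h3 hm) => e; subst m; patd hp; first [by left | by right].
Qed.

Lemma both a b c Oc Y Y' : C2 -> H2c a b c Oc -> Y \in P -> Y' \in P ->
  coord Y a = 0%N -> coord Y b <> 0%N -> coord Y c <> 0%N ->
  coord Y' a <> 0%N -> coord Y' b = 0%N -> coord Y' c <> 0%N ->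
  coord Y' a = 1%N -> B1c.
Proof.
move=> hC2 HH hY hY' ya yb yc y'a y'b y'c y'a1.
have HHs := H2c_swap HH.
have HH' := HH.
case: HH => h3 hC [ca cb] n1 n2.
have [ha hb hc] := Ind3_l h3.
have [h3bac h3acb h3cba h3bca h3cab] := Ind3_perm h3.
exists a, Y'; split=> // Z hZ za.
have [zb|zb] := eqVneq (coord Z b) 0%N.
  apply: (hC2 b a c h3bac) => //.
  by move=> zc; apply: (n1 Z hZ).
have za1 : coord Z a = 1%N.
  by case: (c1 HH' hY ya yb yc hZ za) => [//|[zb0 _]]; move/eqP: zb.
have zb1 : coord Z b = 1%N.
  by case: (c1 HHs hY' y'b y'a y'c hZ (elimN eqP zb)) => [//|[za0 _]].
apply: NNPP => nZY.
have hi : indep Y' Z Y.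
  apply: (indepF (c := 1)) hY' hZ hY (nesym nZY) ha (xr1 y'a1) (xr1 za1) _.
  by rewrite (xr0 ya) => /eqP; rewrite eq_sym oner_eq0.
have [m [hm hp]] := HPAT hY' hZ hY hi.
by case: (ind3_cases h3 hm) => e; subst m; patd hp.
Qed.

Lemma main_pa a b c Oc Y : C2 -> H2c a b c Oc -> Y \in P ->
  coord Y a = 0%N -> coord Y b <> 0%N -> coord Y c <> 0%N -> Concl.
Proof.
move=> hC2 HH hY ya yb yc.
have HHs := H2c_swap HH.
have HH' := HH.
case: HH => h3 hC [ca cb] n1 n2.
have [ha hb hc] := Ind3_l h3.
have [h3bac h3acb h3cba h3bca h3cab] := Ind3_perm h3.
have cc := NZ h3 hC ca cb.
have [[Y' [hY' [y'a [y'b y'c]]]]|hno] := classic (exists Y', Y' \in P /\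
    coord Y' a <> 0%N /\ coord Y' b = 0%N /\ coord Y' c <> 0%N).
  left; case: (c1 HH' hY ya yb yc hY' y'a) => [y'a1|[_ yb1]].
    exact: (both hC2 HH' hY hY' ya yb yc y'a y'b y'c y'a1).
  exact: (both hC2 HHs hY' hY y'b y'a y'c yb ya yc yb1).
have HZ : forall Z, Z \in P -> coord Z a <> 0%N -> coord Z a = 1%N.
  move=> Z hZ za.
  have zb : coord Z b <> 0%N.
    move=> zb; have [zc|zc] := eqVneq (coord Z c) 0%N; first by apply: (n1 Z hZ).
    by apply: hno; exists Z; do !split=> //; apply/eqP.
  by case: (c1 HH' hY ya yb yc hZ za) => [//|[]].
have [Z0 [hZ0 z0a]] := HCOV ha.
left; exists a, Z0; split; [by []|by []|exact: HZ|].
move=> Z hZ za; apply: NNPP => nZ.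
have zb : forall W, W \in P -> coord W a <> 0%N -> coord W b <> 0%N.
  move=> W hW wa wb; have [wc|wc] := eqVneq (coord W c) 0%N; first by apply: (n1 W hW).
  by apply: hno; exists W; do !split=> //; apply/eqP.
have hi : indep Z Z0 Oc.
  apply: (indepF (c := 1)) hZ hZ0 hC nZ ha (xr1 (HZ _ hZ za)) (xr1 (HZ _ hZ0 z0a)) _.
  by rewrite (xr0 ca) => /eqP; rewrite eq_sym oner_eq0.
have [m [hm hp]] := HPAT hZ hZ0 hC hi.
have zbZ := zb _ hZ za; have zbZ0 := zb _ hZ0 z0a.
case: (ind3_cases h3 hm) => e; subst m; patd hp.
apply: nZ; apply: (hC2 c a b h3cab) => //.
Qed.

Lemma zero_pair a b c Oc X X' : C2 -> H2c a b c Oc -> X \in P -> X' \in P -> X <> X' ->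
  coord X a = 0%N -> coord X' a = 0%N -> Concl.
Proof.
move=> hC2 HH hX hX' nXX' xa x'a.
have HH' := HH.
case: HH => h3 hC [ca cb] n1 n2.
have [ha hb hc] := Ind3_l h3.
have [h3bac h3acb h3cba h3bca h3cab] := Ind3_perm h3.
have [xb|xb] := eqVneq (coord X b) 0%N.
  have [x'b|x'b] := eqVneq (coord X' b) 0%N.
    exfalso; apply: nXX'.
    by rewrite (OU h3 hX hC xa xb ca cb) (OU h3 hX' hC x'a x'b ca cb).
  apply: (main_pa hC2 HH' hX' x'a (elimN eqP x'b)).
  by move=> x'c; apply: (n2 X' hX').
apply: (main_pa hC2 HH' hX xa (elimN eqP xb)).
by move=> xc; apply: (n2 X hX).
Qed.

Lemma zero_pair_c a b c Oc X X' : C2 -> H2c a b c Oc -> X \in P -> X' \in P -> X <> X' ->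
  coord X c = 0%N -> coord X' c = 0%N -> False.
Proof.
move=> hC2 HH hX hX' nXX' xc x'c.
case: HH => h3 hC [ca cb] n1 n2.
have [h3bac h3acb h3cba h3bca h3cab] := Ind3_perm h3.
apply: nXX'; apply: (hC2 c a b h3cab) => //.
- by move=> xa; apply: (n2 X hX).
- by move=> xb; apply: (n1 X hX).
- by move=> xa; apply: (n2 X' hX').
- by move=> xb; apply: (n1 X' hX').
Qed.

Lemma case2c a b c Oc : C2 -> H2c a b c Oc -> Concl.
Proof.
move=> hC2 HH.
have HHs := H2c_swap HH.
have HH' := HH.
case: HH => h3 hC [ca cb] n1 n2.
have [A [B [C [hA hB hC' hi]]]] := HEX.
have nAB := indep_neq12 hi; have nAC := indep_neq13 hi; have nBC := indep_neq23 hi.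
have [m [hm hp]] := HPAT hA hB hC' hi.
case: (ind3_cases h3 hm) => e; subst m;
  case: hp => [[h1 h2 _]|[h1 _ h2]|[_ h1 h2]].
- exact: (zero_pair hC2 HH' hA hB nAB h1 h2).
- exact: (zero_pair hC2 HH' hA hC' nAC h1 h2).
- exact: (zero_pair hC2 HH' hB hC' nBC h1 h2).
- exact: (zero_pair hC2 HHs hA hB nAB h1 h2).
- exact: (zero_pair hC2 HHs hA hC' nAC h1 h2).
- exact: (zero_pair hC2 HHs hB hC' nBC h1 h2).
- by exfalso; apply: (zero_pair_c hC2 HH' hA hB nAB h1 h2).
- by exfalso; apply: (zero_pair_c hC2 HH' hA hC' nAC h1 h2).
- by exfalso; apply: (zero_pair_c hC2 HH' hB hC' nBC h1 h2).
Qed.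

Lemma pure_pair a b c X X' : C2 -> Ind3 a b c -> noO a b -> noO a c ->
  X \in P -> X' \in P -> X <> X' -> coord X a = 0%N -> coord X' a = 0%N -> False.
Proof.
move=> hC2 h3 nab nac hX hX' nXX' xa x'a.
apply: nXX'; apply: (hC2 a b c h3) => //.
- by move=> xb; apply: (nab X hX).
- by move=> xc; apply: (nac X hX).
- by move=> xb; apply: (nab X' hX').
- by move=> xc; apply: (nac X' hX').
Qed.

Lemma case2d a b c : C2 -> Ind3 a b c -> noO a b -> noO a c -> noO b c -> False.
Proof.
move=> hC2 h3 nab nac nbc.
have [h3bac h3acb h3cba h3bca h3cab] := Ind3_perm h3.
have [A [B [C [hA hB hC hi]]]] := HEX.
have nAB := indep_neq12 hi; have nAC := indep_neq13 hi; have nBC := indep_neq23 hi.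
have [m [hm hp]] := HPAT hA hB hC hi.
have nba := noO_sym nab; have nca := noO_sym nac; have ncb := noO_sym nbc.
case: (ind3_cases h3 hm) => e; subst m;
  case: hp => [[h1 h2 _]|[h1 _ h2]|[_ h1 h2]].
- exact: (pure_pair hC2 h3 nab nac hA hB nAB h1 h2).
- exact: (pure_pair hC2 h3 nab nac hA hC nAC h1 h2).
- exact: (pure_pair hC2 h3 nab nac hB hC nBC h1 h2).
- exact: (pure_pair hC2 h3bac nba nbc hA hB nAB h1 h2).
- exact: (pure_pair hC2 h3bac nba nbc hA hC nAC h1 h2).
- exact: (pure_pair hC2 h3bac nba nbc hB hC nBC h1 h2).
- exact: (pure_pair hC2 h3cab nca ncb hA hB nAB h1 h2).
- exact: (pure_pair hC2 h3cab nca ncb hA hC nAC h1 h2).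
- exact: (pure_pair hC2 h3cab nca ncb hB hC nBC h1 h2).
Qed.

Lemma Ind3_exists : exists a b c, Ind3 a b c.
Proof.
exists (lift l (0 : 'I_3)), (lift l (1 : 'I_3)), (lift l (2 : 'I_3)).
rewrite /Ind3 !(eq_sym _ l) !neq_lift /=.
by rewrite !(inj_eq (@lift_inj 4 l)).
Qed.

Lemma core_concl : Concl.
Proof.
have [a [b [c h3]]] := Ind3_exists.
have [h3bac h3acb h3cba h3bca h3cab] := Ind3_perm h3.
have [hC2|nC2] := classic C2; last first.
  apply: NNPP => hcon; apply: nC2 => a' b' c' h3' Y Y' hY hY' ya y'a yb yc y'b y'c.
  apply: NNPP => nYY'; apply: hcon.
  exact: (case1 h3' hY hY' nYY' ya y'a yb yc y'b y'c).
have [[Oa [hA [ab ac]]]|nA] := classic (exists O, O \in P /\ coord O b = 0%N /\ coord O c = 0%N);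
have [[Ob [hB [ba bc]]]|nB] := classic (exists O, O \in P /\ coord O a = 0%N /\ coord O c = 0%N);
have [[Oc [hC [ca cb]]]|nC] := classic (exists O, O \in P /\ coord O a = 0%N /\ coord O b = 0%N).
- exact: (case2a h3 hA hB hC ab ac ba bc ca cb).
- apply: (case2b (a := a) (b := b) (c := c) (Oa := Oa) (Ob := Ob) hC2).
  by split=> //; split=> // Y hY [y1 y2]; apply: nC; exists Y.
- apply: (case2b (a := a) (b := c) (c := b) (Oa := Oa) (Ob := Oc) hC2).
  by split=> //; split=> // Y hY [y1 y2]; apply: nB; exists Y.
- apply: (case2c (a := b) (b := c) (c := a) (Oc := Oa) hC2).
  split=> //.
  + by move=> Y hY [y1 y2]; apply: nB; exists Y.
  + by move=> Y hY [y1 y2]; apply: nC; exists Y.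
- apply: (case2b (a := b) (b := c) (c := a) (Oa := Ob) (Ob := Oc) hC2).
  by split=> //; split=> // Y hY [y1 y2]; apply: nA; exists Y.
- apply: (case2c (a := a) (b := c) (c := b) (Oc := Ob) hC2).
  split=> //.
  + by move=> Y hY [y1 y2]; apply: nA; exists Y.
  + by move=> Y hY [y1 y2]; apply: nC; exists Y.
- apply: (case2c (a := a) (b := b) (c := c) (Oc := Oc) hC2).
  split=> //.
  + by move=> Y hY [y1 y2]; apply: nA; exists Y.
  + by move=> Y hY [y1 y2]; apply: nB; exists Y.
- exfalso; apply: (case2d hC2 h3).
  + by move=> Y hY [y1 y2]; apply: nC; exists Y.
  + by move=> Y hY [y1 y2]; apply: nB; exists Y.
  + by move=> Y hY [y1 y2]; apply: nA; exists Y.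
Qed.

End Core.

Lemma ptQE (x : pt 4) j : ptQ x ord0 j = xr x j.
Proof. by rewrite /ptQ mxE. Qed.

Lemma sum_one (f : 'I_4 -> rat) (l : 'I_4) : (forall j, j != l -> f j = 0) ->
  \sum_(j < 4) f j = f l.
Proof. by move=> h; rewrite (bigD1 l) //= big1 ?addr0 // => j /h. Qed.

Definition base (S : {fset pt 4}) := nth (const_mx 0%N) (enum_fset S) 0.
Definition dmx (S : {fset pt 4}) := (\matrix_(k < size (enum_fset S), j < 4)
           (ptQ (nth (const_mx 0%N) (enum_fset S) k) ord0 j
            - ptQ (nth (const_mx 0%N) (enum_fset S) 0%N) ord0 j))%R.
Lemma affdimE S : affdim S = \rank (dmx S).
Proof. by []. Qed.

Lemma dmx_row S x : x \in S -> (ptQ x - ptQ (base S) <= dmx S)%MS.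
Proof.
move=> hx.
have hk : (index x (enum_fset S) < size (enum_fset S))%N by rewrite index_mem.
apply: (eq_row_sub (Ordinal hk)); apply/rowP => j.
by rewrite !mxE /= nth_index.
Qed.

Lemma subN_sub m n (A B : 'M[rat]_(1, n)) (C : 'M[rat]_(m, n)) :
  (A <= C)%MS -> (B <= C)%MS -> (A - B <= C)%MS.
Proof. by move=> hA hB; apply: addmx_sub => //; rewrite -scaleN1r scalemx_sub. Qed.

Lemma dmx_diff S x y : x \in S -> y \in S -> (ptQ x - ptQ y <= dmx S)%MS.
Proof.
move=> hx hy.
have -> : ptQ x - ptQ y = (ptQ x - ptQ (base S)) - (ptQ y - ptQ (base S)).
  by apply/rowP => j; rewrite !mxE; ring.
by apply: subN_sub; apply: dmx_row.
Qed.

Lemma dmx_le S n (V : 'M[rat]_(n, 4)) :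
  (forall x, x \in S -> (ptQ x - ptQ (base S) <= V)%MS) -> (dmx S <= V)%MS.
Proof.
move=> h; apply/row_subP => k.
have -> : row k (dmx S) = ptQ (nth (const_mx 0%N) (enum_fset S) k) - ptQ (base S).
  by apply/rowP => j; rewrite !mxE.
by apply: h; apply: mem_nth.
Qed.

Lemma card_sep (S : {fset pt 4}) (p : pred (pt 4)) (s : seq (pt 4)) :
  uniq s -> S =i s -> #|` [fset x in S | p x]| = count p s.
Proof.
move=> us eS; rewrite -size_filter; apply: perm_size; apply: uniq_perm.
- exact: fset_uniq.
- exact: filter_uniq.
- by move=> x; rewrite !inE mem_filter eS andbC.
Qed.

Lemma card_S (S : {fset pt 4}) (s : seq (pt 4)) : uniq s -> S =i s -> #|` S| = size s.
Proof. by move=> us eS; apply: perm_size; apply: uniq_perm => //; apply: fset_uniq. Qed.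

Lemma sum3 (F : 'I_3 -> rat) :
  \sum_(k < 3) F k = F ord0 + F (lift ord0 ord0) + F (lift ord0 (lift ord0 ord0)).
Proof. by rewrite !big_ord_recl big_ord0 addr0 addrA. Qed.

Section Infra.
Variables (tau : {fset pt 4}) (Q : pt 4) (l : 'I_4) (a : 'rV[rat]_4) (b : rat).
Hypothesis hQ : Q \in tau.
Hypothesis hql : coord Q l <> 0%N.
Hypothesis hqo : forall i, i != l -> coord Q i = 0%N.
Hypothesis ha : forall j, 0 < a ord0 j.
Hypothesis hspan : forall y : 'rV[rat]_4,
  in_aff_span tau y <-> (\sum_(j < 4) a ord0 j * y ord0 j = b).
Hypothesis haff : affdim (tau `\ Q) = 2%N.
Hypothesis hsimp : forall S, S `<=` tau -> is_simplex 3 S -> is_B_simplex 3 S.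

Local Notation P := (tau `\ Q).

Lemma hpl X : X \in tau -> \sum_(j < 4) a ord0 j * xr X j = b.
Proof.
move=> hX; have := (hspan (ptQ X)).1; rewrite /in_aff_span.
have h : \sum_(j < 4) a ord0 j * xr X j = \sum_(j < 4) a ord0 j * ptQ X ord0 j.
  by apply: eq_bigr => j _; rewrite ptQE.
rewrite h; apply; exists (fun x => (x == X)%:R); split.
  rewrite (bigD1_seq X) ?fset_uniq //= eqxx big1 ?addr0 // => x /negbTE ->.
  by [].
rewrite (bigD1_seq X) ?fset_uniq //= eqxx scale1r big1 ?addr0 //.
by move=> x /negbTE ->; rewrite scale0r.
Qed.

Lemma bpos : 0 < b.
Proof.
rewrite -(hpl hQ) (sum_one (l := l)).
  by rewrite pmulr_rgt0 // /xr ltr0n lt0n; apply/eqP.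
by move=> j hj; rewrite (xr0 (hqo hj)) mulr0.
Qed.

Lemma plane_l X : X \in tau ->
  a ord0 l * xr X l = b - \sum_(j < 4 | j != l) a ord0 j * xr X j.
Proof. by move=> hX; rewrite -(hpl hX) (bigD1 l) //=; ring. Qed.

Lemma hINJ X Y : X \in P -> Y \in P -> (forall i, i != l -> coord X i = coord Y i) -> X = Y.
Proof.
move=> hX hY h.
have hXt : X \in tau by move: hX; rewrite in_fsetD1 => /andP[].
have hYt : Y \in tau by move: hY; rewrite in_fsetD1 => /andP[].
have el : coord X l = coord Y l.
  apply: xr_inj.
  have e1 := plane_l hXt; have e2 := plane_l hYt.
  have e3 : \sum_(j < 4 | j != l) a ord0 j * xr X j = \sum_(j < 4 | j != l) a ord0 j * xr Y j.
    by apply: eq_bigr => j hj; rewrite /xr (h j hj).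
  have hal : a ord0 l != 0 by rewrite gt_eqF.
  apply: (mulfI hal); by rewrite e1 e2 e3.
apply/matrixP => i j; rewrite (ord1 i).
have [->|hj] := eqVneq j l; first exact: el.
exact: h.
Qed.

Lemma inP X : X \in P -> X \in tau.
Proof. by rewrite in_fsetD1 => /andP[]. Qed.
Lemma inP_neq X : X \in P -> X != Q.
Proof. by rewrite in_fsetD1 => /andP[]. Qed.

Lemma mulaT (w : 'rV[rat]_4) : (w *m a^T) ord0 ord0 = \sum_(j < 4) a ord0 j * w ord0 j.
Proof. by rewrite !mxE; apply: eq_bigr => j _; rewrite !mxE mulrC. Qed.

Lemma mulaT0 (w : 'rV[rat]_4) : \sum_(j < 4) a ord0 j * w ord0 j = 0 -> w *m a^T = 0.
Proof. by move=> h; apply/matrixP => i k; rewrite (ord1 i) (ord1 k) mulaT h mxE. Qed.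

Lemma rank_kera : \rank (kermx a^T) = 3%N.
Proof.
rewrite mxrank_ker mxrank_tr rank_rV.
have -> : (a != 0) by apply/eqP => a0; have := ha l; rewrite a0 mxE ltxx.
by [].
Qed.

Lemma sum_comb3 (al be ga : rat) X Y Z : X \in tau -> Y \in tau -> Z \in tau ->
  \sum_(j < 4) a ord0 j * (al * xr X j + be * xr Y j + ga * xr Z j) = (al + be + ga) * b.
Proof.
move=> hX hY hZ.
have -> : \sum_(j < 4) a ord0 j * (al * xr X j + be * xr Y j + ga * xr Z j) =
  al * (\sum_(j < 4) a ord0 j * xr X j) + be * (\sum_(j < 4) a ord0 j * xr Y j)
  + ga * (\sum_(j < 4) a ord0 j * xr Z j).
  rewrite !mulr_sumr -!big_split /=; apply: eq_bigr => j _; ring.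
rewrite !hpl //; ring.
Qed.

Lemma spanD y : in_aff_span tau y -> (ptQ Q - ptQ (base P) <= dmx P)%MS ->
  (y - ptQ (base P) <= dmx P)%MS.
Proof.
move=> [c [hc ->]] hQD.
have -> : \sum_(x <- tau) c x *: ptQ x - ptQ (base P) =
   \sum_(x <- tau) c x *: (ptQ x - ptQ (base P)).
  under [X in _ = X]eq_bigr do rewrite scalerBr.
  by rewrite sumrB -scaler_suml hc scale1r.
rewrite big_seq; apply: summx_sub => x hx; apply: scalemx_sub.
have [->|nxQ] := eqVneq x Q; first exact: hQD.
by apply: dmx_row; rewrite in_fsetD1 nxQ.
Qed.

Lemma QNA X Y Z (al be ga : rat) : X \in P -> Y \in P -> Z \in P -> al + be + ga = 1 ->
  ptQ Q = al *: ptQ X + be *: ptQ Y + ga *: ptQ Z -> False.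
Proof.
move=> hX hY hZ s e.
have hQD : (ptQ Q - ptQ (base P) <= dmx P)%MS.
  have -> : ptQ Q - ptQ (base P) = al *: (ptQ X - ptQ (base P)) +
     be *: (ptQ Y - ptQ (base P)) + ga *: (ptQ Z - ptQ (base P)).
    rewrite e; apply/rowP => j; rewrite !mxE.
    have -> : ga = 1 - al - be by lra.
    ring.
  by apply: addmx_sub; [apply: addmx_sub|]; apply: scalemx_sub; apply: dmx_row.
have kerD : (kermx a^T <= dmx P)%MS.
  apply/row_subP => k.
  set w := row k (kermx a^T).
  have hw : w *m a^T = 0 by apply/sub_kermxP; apply: row_sub.
  have hw0 : \sum_(j < 4) a ord0 j * w ord0 j = 0 by rewrite -mulaT hw mxE.
  have hy1 : in_aff_span tau (ptQ Q).
    by apply/hspan; rewrite -(hpl hQ); apply: eq_bigr => j _; rewrite ptQE.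
  have hy2 : in_aff_span tau (ptQ Q + w).
    apply/hspan.
    have -> : \sum_(j < 4) a ord0 j * (ptQ Q + w) ord0 j =
       \sum_(j < 4) a ord0 j * xr Q j + \sum_(j < 4) a ord0 j * w ord0 j.
      by rewrite -big_split /=; apply: eq_bigr => j _; rewrite !mxE; ring.
    by rewrite hw0 addr0 hpl.
  have -> : w = (ptQ Q + w - ptQ (base P)) - (ptQ Q - ptQ (base P)).
    by apply/rowP => j; rewrite !mxE; ring.
  by apply: subN_sub; apply: spanD.
have := mxrankS kerD; rewrite rank_kera -affdimE haff.
by [].
Qed.

Lemma hN X Y Z : X \in P -> Y \in P -> Z \in P -> forall al be ga : rat,
  (forall i, i != l -> al * xr X i + be * xr Y i + ga * xr Z i = 0) -> al + be + ga = 0.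
Proof.
move=> hX hY hZ al be ga H; apply/eqP/negP => /negP sn.
set s := al + be + ga in sn.
apply: (QNA (al := al / s) (be := be / s) (ga := ga / s) hX hY hZ).
  by rewrite /s; field.
have hal : a ord0 l != 0 by rewrite gt_eqF.
have eQ : a ord0 l * xr Q l = b.
  rewrite -(hpl hQ) (sum_one (l := l)) // => j hj.
  by rewrite (xr0 (hqo hj)) mulr0.
have ev : a ord0 l * (al * xr X l + be * xr Y l + ga * xr Z l) = s * b.
  rewrite -(sum_comb3 al be ga (inP hX) (inP hY) (inP hZ)) (sum_one (l := l)) //.
  by move=> j hj; rewrite H // mulr0.
apply/rowP => j; rewrite !mxE.
have [->|hj] := eqVneq j l.
  apply: (mulfI hal); rewrite eQ.
  have -> : a ord0 l * (al / s * xr X l + be / s * xr Y l + ga / s * xr Z l) =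
    (a ord0 l * (al * xr X l + be * xr Y l + ga * xr Z l)) / s by field.
  by rewrite ev; field.
rewrite (_ : (coord Q j)%:R = 0); last by rewrite (hqo hj).
have := H j hj; rewrite /xr => h.
have -> : al / s * (coord X j)%:R + be / s * (coord Y j)%:R + ga / s * (coord Z j)%:R =
  (al * (coord X j)%:R + be * (coord Y j)%:R + ga * (coord Z j)%:R) / s by field.
by rewrite h mul0r.
Qed.

Lemma sum2 (F : 'I_2 -> rat) : \sum_(k < 2) F k = F ord0 + F (lift ord0 ord0).
Proof. by rewrite big_ord_recl big_ord1. Qed.

Lemma hAFF X Y Z : X \in P -> Y \in P -> Z \in P -> indep l X Y Z ->
  forall W, W \in P -> exists al be ga : rat, al + be + ga = 1 /\
    forall j, xr W j = al * xr X j + be * xr Y j + ga * xr Z j.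
Proof.
move=> hX hY hZ hi W hW.
pose M2 := \matrix_(k < 2, j < 4)
  (if k == ord0 then ptQ Y ord0 j - ptQ X ord0 j else ptQ Z ord0 j - ptQ X ord0 j).
have sM2 : (M2 <= dmx P)%MS.
  apply/row_subP => k.
  have [->|hk] := eqVneq k ord0.
    have -> : row ord0 M2 = ptQ Y - ptQ X by apply/rowP => j; rewrite !mxE.
    exact: dmx_diff.
  have -> : row k M2 = ptQ Z - ptQ X by apply/rowP => j; rewrite !mxE (negbTE hk).
  exact: dmx_diff.
have fM2 : row_free M2.
  apply: inj_row_free => v hv.
  have H : forall j, v ord0 ord0 * (xr Y j - xr X j) +
      v ord0 (lift ord0 ord0) * (xr Z j - xr X j) = 0.
    move=> j; have := congr1 (fun M : 'M[rat]_(1,4) => M ord0 j) hv; rewrite !mxE sum2 !mxE /=.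
    by [].
  have H' : forall j, j != l -> (- v ord0 ord0 - v ord0 (lift ord0 ord0)) * xr X j +
     v ord0 ord0 * xr Y j + v ord0 (lift ord0 ord0) * xr Z j = 0.
    by move=> j _; rewrite -(H j); ring.
  have [h1 h2 h3] := hi _ _ _ H'.
  apply/rowP => k; rewrite mxE.
  have [->|hk] := eqVneq k ord0; first by [].
  suff -> : k = lift ord0 ord0 by [].
  by apply: val_inj; case: k hk => [[|[|?]] ?] //=.
have DM2 : (dmx P <= M2)%MS.
  rewrite -(mxrank_leqif_sup sM2).2.
  by move: fM2; rewrite /row_free -affdimE haff => /eqP ->.
have : (ptQ W - ptQ X <= M2)%MS by apply: submx_trans DM2; apply: dmx_diff.
case/submxP => w ew.
exists (1 - w ord0 ord0 - w ord0 (lift ord0 ord0)), (w ord0 ord0), (w ord0 (lift ord0 ord0)).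
split; first by ring.
move=> j; have := congr1 (fun M : 'M[rat]_(1,4) => M ord0 j) ew; rewrite !mxE sum2 !mxE /=.
move=> h.
have -> : xr W j = (xr W j - xr X j) + xr X j by ring.
rewrite h; ring.
Qed.

Lemma hCOV i : i != l -> exists Y, Y \in P /\ coord Y i <> 0%N.
Proof.
move=> hi; apply: NNPP => hno.
have h0 : forall x, x \in tau -> xr x i = 0.
  move=> x hx; have [->|nxQ] := eqVneq x Q; first by rewrite (xr0 (hqo hi)).
  apply: xr0; apply: NNPP => nz; apply: hno; exists x; split=> //.
  by rewrite in_fsetD1 nxQ.
have hai : a ord0 i != 0 by rewrite gt_eqF.
pose y : 'rV[rat]_4 := (b / a ord0 i) *: delta_mx ord0 i.
have hy : in_aff_span tau y.
  apply/hspan; rewrite (sum_one (l := i)).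
    by rewrite /y !mxE !eqxx /=; field.
  by move=> j hj; rewrite /y !mxE (negbTE hj) andbF mulr0 mulr0.
case: hy => c [_ e].
have := congr1 (fun M : 'M[rat]_(1,4) => M ord0 i) e; rewrite summxE /y !mxE !eqxx /= mulr1.
rewrite big_seq big1; last by move=> x hx; rewrite !mxE -/(xr x i) (h0 x hx) mulr0.
move/eqP; rewrite mulf_eq0 invr_eq0 (negbTE hai) orbF => /eqP b0.
by have := bpos; rewrite b0 ltxx.
Qed.

Lemma hEX : exists X Y Z, [/\ X \in P, Y \in P, Z \in P & indep l X Y Z].
Proof.
set D := dmx P.
have hr : \rank D = 2%N by rewrite -affdimE haff.
have [k1 hk1] : exists k1, row k1 D != 0.
  apply: NNPP => hno.
  have D0 : D = 0.
    apply/matrixP => i j.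
    have : row i D = 0 by apply: NNPP => nz; apply: hno; exists i; apply/eqP.
    by move/rowP/(_ j); rewrite !mxE.
  by move: hr; rewrite D0 mxrank0.
have [k2 hk2] : exists k2, ~~ (row k2 D <= row k1 D)%MS.
  apply: NNPP => hno.
  have sD : (D <= row k1 D)%MS.
    by apply/row_subP => k; apply: NNPP => h; apply: hno; exists k; apply/negP.
  have := mxrankS sD; rewrite hr => h2.
  by have := leq_trans h2 (rank_leq_row (row k1 D)).
set s := enum_fset P.
have hsz : (0 < size s)%N by apply: leq_ltn_trans (leq0n k1) (ltn_ord k1).
set X0 := nth (const_mx 0%N) s 0.
set X1 := nth (const_mx 0%N) s k1.
set X2 := nth (const_mx 0%N) s k2.
have hX0 : X0 \in P by apply: mem_nth.
have hX1 : X1 \in P by apply: mem_nth.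
have hX2 : X2 \in P by apply: mem_nth.
have rD : forall k, row k D = ptQ (nth (const_mx 0%N) s k) - ptQ X0.
  by move=> k; apply/rowP => j; rewrite !mxE.
exists X0, X1, X2; split=> // al be ga H.
have sm := hN hX0 hX1 hX2 H.
have v0 : forall j, al * xr X0 j + be * xr X1 j + ga * xr X2 j = 0.
  move=> j; have [->|hj] := eqVneq j l; last exact: H.
  have := sum_comb3 al be ga (inP hX0) (inP hX1) (inP hX2).
  rewrite sm mul0r (sum_one (l := l)); last by move=> j' hj'; rewrite H // mulr0.
  move/eqP; rewrite mulf_eq0 gt_eqF //= => /eqP //.
have e : forall j, be * (row k1 D) ord0 j + ga * (row k2 D) ord0 j = 0.
  move=> j; rewrite !rD !mxE -!/(xr _ j).
  have eal : al = - be - ga by lra.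
  have := v0 j; rewrite eal => h; rewrite -h; ring.
have ga0 : ga = 0.
  apply/eqP/negP => /negP gnz; move/negP: hk2; apply.
  have -> : row k2 D = (- be / ga) *: row k1 D.
    apply/rowP => j; rewrite [RHS]mxE; have := e j => h.
    apply: (mulfI gnz).
    have -> : ga * (- be / ga * row k1 D ord0 j) = - be * row k1 D ord0 j by field.
    have : ga * row k2 D ord0 j - (- be * row k1 D ord0 j) =
      be * row k1 D ord0 j + ga * row k2 D ord0 j by ring.
    by rewrite h => /eqP; rewrite subr_eq0 => /eqP.
  exact: scalemx_sub (submx_refl _).
have be0 : be = 0.
  have : be *: row k1 D = 0.
    by apply/rowP => j; rewrite [LHS]mxE [RHS]mxE; have := e j; rewrite ga0 mul0r addr0.
  by move/eqP; rewrite scaler_eq0 (negbTE hk1) orbF => /eqP.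
split=> //; lra.
Qed.

Lemma hPAT X Y Z : X \in P -> Y \in P -> Z \in P -> indep l X Y Z ->
  (exists i, i != l /\ pat i X Y Z) \/
  [/\ coord X l = 0%N, coord Y l = 0%N, coord Z l = 0%N & coord Q l = 1%N].
Proof.
move=> hX hY hZ hi.
have nQX := inP_neq hX; have nQY := inP_neq hY; have nQZ := inP_neq hZ.
have nXY := indep_neq12 hi; have nXZ := indep_neq13 hi; have nYZ := indep_neq23 hi.
set S := [fset Q; X; Y; Z].
set s := [:: Q; X; Y; Z].
have us : uniq s.
  rewrite /s /= !inE !negb_or !(eq_sym Q) nQX nQY nQZ.
  by rewrite (introN eqP nXY) (introN eqP nXZ) (introN eqP nYZ).
have eS : S =i s by move=> x; rewrite !inE /= !orbA.
have hSt : S `<=` tau.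
  apply/fsubsetP => x; rewrite eS !inE => /or4P[] /eqP ->; by [|apply: inP].
have hS4 : #|` S| = 4%N by rewrite (card_S us eS).
have hsz : (0 < size (enum_fset S))%N by rewrite -/(size S) hS4.
have hbase : base S \in tau.
  by apply: (fsubsetP hSt); apply: mem_nth.
have up : (dmx S <= kermx a^T)%MS.
  apply: dmx_le => x hx; apply/sub_kermxP; apply: mulaT0.
  have -> : \sum_(j < 4) a ord0 j * (ptQ x - ptQ (base S)) ord0 j =
     \sum_(j < 4) a ord0 j * xr x j - \sum_(j < 4) a ord0 j * xr (base S) j.
    by rewrite -sumrB; apply: eq_bigr => j _; rewrite !mxE; ring.
  by rewrite !hpl ?subrr //; apply: (fsubsetP hSt).
pose M3 := \matrix_(k < 3, j < 4) (ptQ (nth Q [:: X; Y; Z] k) ord0 j - ptQ Q ord0 j).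
have lo : (M3 <= dmx S)%MS.
  apply/row_subP => k.
  have -> : row k M3 = ptQ (nth Q [:: X; Y; Z] k) - ptQ Q by apply/rowP => j; rewrite !mxE.
  apply: dmx_diff; last by rewrite eS !inE eqxx.
  by rewrite eS; case: k => [[|[|[|?]]] ?] //=; rewrite !inE eqxx ?orbT.
have fM3 : row_free M3.
  apply: inj_row_free => v hv.
  have H : forall j, j != l -> v ord0 ord0 * xr X j + v ord0 (lift ord0 ord0) * xr Y j +
      v ord0 (lift ord0 (lift ord0 ord0)) * xr Z j = 0.
    move=> j hj; have := congr1 (fun M : 'M[rat]_(1,4) => M ord0 j) hv.
    rewrite !mxE sum3 !mxE /= -!/(xr _ j) (xr0 (hqo hj)) !subr0 => ->.
    by [].
  have [h1 h2 h3] := hi _ _ _ H.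
  apply/rowP => k; rewrite mxE.
  by case: k => [[|[|[|?]]] ?] //=; [rewrite -h1|rewrite -h2|rewrite -h3]; congr (v _ _);
     apply: val_inj.
have hdim : affdim S = 3%N.
  apply/eqP; rewrite eqn_leq; apply/andP; split.
    by rewrite affdimE; apply: leq_trans (mxrankS up) _; rewrite rank_kera.
  move: fM3; rewrite /row_free => /eqP hr3.
  by rewrite affdimE; apply: (@leq_trans (\rank M3)); [rewrite hr3 | exact: mxrankS].
have [_ [i [hcnt h01]]] := hsimp hSt (conj hS4 hdim).
rewrite (card_sep _ us eS) /= in hcnt.
have [eil|nil] := eqVneq i l.
  subst i; right.
  have q1 : coord Q l = 1%N by apply: h01; rewrite ?inE ?eqxx //; apply/eqP.
  move: hcnt; rewrite q1 /=.
  by case: eqP; case: eqP; case: eqP.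
left; exists i; split=> //.
move: hcnt; rewrite (hqo nil) eqxx /=.
have hX' : X \in S by rewrite !inE eqxx !orbT.
have hY' : Y \in S by rewrite !inE eqxx !orbT.
have hZ' : Z \in S by rewrite !inE eqxx !orbT.
case: (eqVneq (coord X i) 0%N) => xi; case: (eqVneq (coord Y i) 0%N) => yi;
  case: (eqVneq (coord Z i) 0%N) => zi //= _.
- by constructor 1; split=> //; apply: h01.
- by constructor 2; split=> //; apply: h01.
- by constructor 3; split=> //; apply: h01.
Qed.

End Infra.

Local Close Scope ring_scope.

Theorem lemma2p9 (tau : {fset pt 4}) (Q : pt 4) :
  is_B_facet tau -> Q \in tau -> nnz Q = 1%N -> affdim (tau `\ Q) = 2%N ->
  is_B1_facet tau \/ is_B2_facet tau \/ is_flat_border tau.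
Proof.
move=> [[a [b [ha hspan]]] hsimp] hQ hnnz haff.
have [l [hql hqo]] : exists l, coord Q l <> 0%N /\ forall i, i != l -> coord Q i = 0%N.
  move: hnnz; rewrite /nnz => /eqP /cards1P [l hl].
  have hl_in : l \in [set i | coord Q i != 0%N] by rewrite hl in_set1.
  exists l; split; first by move: hl_in; rewrite inE => /eqP.
  move=> i hi; apply/eqP; apply: contraNT hi => hnz.
  have : i \in [set i | coord Q i != 0%N] by rewrite inE.
  by rewrite hl in_set1.
have hsimp' : forall S, S `<=` tau -> is_simplex 3 S -> is_B_simplex 3 S := hsimp.
have hsub : forall x, x \in tau -> x != Q -> x \in tau `\ Q.
  by move=> x hx nxQ; rewrite in_fsetD1 nxQ hx.
have [[X [Y [Z [hX [hY [hZ [hi [xl [yl [zl ql]]]]]]]]]]|nolc] := classic (exists X Y Z,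
   X \in tau `\ Q /\ Y \in tau `\ Q /\ Z \in tau `\ Q /\ indep l X Y Z /\
   coord X l = 0%N /\ coord Y l = 0%N /\ coord Z l = 0%N /\ coord Q l = 1%N).
  left; exists l.
  have hW : forall W, W \in tau `\ Q -> coord W l = 0%N.
    move=> W hW; have [al [be [ga [_ e]]]] := hAFF haff hX hY hZ hi hW.
    apply: xr_eq0; rewrite e (xr0 xl) (xr0 yl) (xr0 zl); ring.
  have hset : [fset x in tau | coord x l != 0%N] = [fset Q].
    apply/fsetP => x; rewrite !inE; apply/andP/eqP.
      move=> [hx nz]; apply/eqP; apply: contraNT nz => nxQ.
      by rewrite (hW x (hsub x hx nxQ)).
    by move=> ->; split=> //; apply/eqP.
  split; first by rewrite hset cardfs1.
  move=> x hx nz; have [->|nxQ] := eqVneq x Q; first exact: ql.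
  by move: nz; rewrite (hW x (hsub x hx nxQ)).
have HAFF : forall X Y Z, X \in tau `\ Q -> Y \in tau `\ Q -> Z \in tau `\ Q ->
    indep l X Y Z -> forall W, W \in tau `\ Q -> exists al be ga : rat, (al + be + ga = 1)%R /\
    forall i, i != l -> xr W i = (al * xr X i + be * xr Y i + ga * xr Z i)%R.
  move=> X Y Z hX hY hZ hi W hW; have [al [be [ga [s e]]]] := hAFF haff hX hY hZ hi hW.
  by exists al, be, ga; split=> // i _.
have HPAT : forall X Y Z, X \in tau `\ Q -> Y \in tau `\ Q -> Z \in tau `\ Q ->
    indep l X Y Z -> exists i, i != l /\ pat i X Y Z.
  move=> X Y Z hX hY hZ hi.
  case: (hPAT hQ hql hqo ha hspan hsimp' hX hY hZ hi) => // [[xl yl zl ql]].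
  by exfalso; apply: nolc; exists X, Y, Z.
have := core_concl (hN hQ hqo ha hspan haff) (hINJ ha hspan) HAFF HPAT
  (hEX hQ hqo ha hspan haff) (hCOV hQ hql hqo ha hspan).
case=> [[i [C [hil hC ci hu]]]|[[i [j [hil hjl hij hall]]]|
        [i [j [C [D [[hil [hjl hij]] [[hC [ci cj]] [[hD [di dj]] hall]]]]]]]]].
- left; exists i.
  have hCt : C \in tau by move: hC; rewrite in_fsetD1 => /andP[].
  have hset : [fset x in tau | coord x i != 0%N] = [fset C].
    apply/fsetP => x; rewrite !inE; apply/andP/eqP.
      move=> [hx nz]; have [exQ|nxQ] := eqVneq x Q.
        by move: nz; rewrite exQ (hqo _ hil).
      by apply: hu; [apply: hsub|apply/eqP].
    by move=> ->; split=> //; rewrite ci.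
  split; first by rewrite hset cardfs1.
  move=> x hx nz; have [exQ|nxQ] := eqVneq x Q.
    by move: nz; rewrite exQ (hqo _ hil).
  by rewrite (hu x (hsub x hx nxQ)) //; apply/eqP.
- right; left; exists i, j; split=> // x hx.
  have [->|nxQ] := eqVneq x Q; first by rewrite (hqo _ hil) (hqo _ hjl).
  by case: (hall x (hsub x hx nxQ)) => [[-> ->]|[[-> ->]|[-> ->]]].
- right; right; exists i, j, C.
  have hCt : C \in tau by move: hC; rewrite in_fsetD1 => /andP[].
  have hDt : D \in tau by move: hD; rewrite in_fsetD1 => /andP[].
  have nDQ : D != Q by move: hD; rewrite in_fsetD1 => /andP[].
  split=> //.
    have : [fset D; Q] `<=` [fset x in tau | (coord x i == 0%N) && (coord x j == 0%N)].
      apply/fsubsetP => x; rewrite !inE => /orP[] /eqP ->.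
        by rewrite hDt di dj.
      by rewrite hQ (hqo _ hil) (hqo _ hjl).
    by move/fsubset_leq_card; rewrite cardfs2 nDQ.
  move=> x hx nxC; have [->|nxQ] := eqVneq x Q; first by rewrite (hqo _ hil).
  by case: (hall x (hsub x hx nxQ) (elimN eqP nxC)) => ->; rewrite ?eqxx ?orbT.
Qed.
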